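(* There is an absolute constant $C>0$ such that the following holds. Let $(G,s,t)$ be an oriented serial superedge on $n$ vertices with principal subgraphs $(G_1,s_1,t_1),\dots,(G_k,s_k,t_k)$, each $G_i$ non-serial and having $n_i$ vertices. Then $$\sum_{i=1}^k n_i\,\big|\mathsf{ST}(G_i)/\mathrm{Aut}_{\mathrm{or}}(G_i,s_i,t_i)\big|\le C\,n\,\big|\mathsf{ST}(G)/\mathrm{Aut}_{\mathrm{or}}(G,s,t)\big|,$$ i.e. the left side is $O\big(n\,|\mathsf{ST}(G)/\mathrm{Aut}_{\mathrm{or}}(G,s,t)|\big)$.
   Context: All graphs are finite, simple and undirected. An oriented series-parallel graph is a triple $(G,s,t)$ where $G$ is a graph and $s\neq t$ are vertices, defined recursively: (i) $G$ is a single edge with vertex set $\{s,t\}$; or (ii) (serial superedge) there are $k\ge 2$ oriented series-parallel graphs $(G_1,s_1,t_1),\dots,(G_k,s_k,t_k)$ with $s_1=s$, $t_k=t$, $t_i=s_{i+1}$ for $1\le i<k$, $V(G_i)\cap V(G_{i+1})=\{s_{i+1}\}$, $V(G_i)\cap V(G_j)=\emptyset$ for $|i-j|\ge2$, and $G=G_1\cup\dots\cup G_k$; or (iii) (parallel superedge) there are $k\ge2$ oriented series-parallel graphs $(G_1,s,t),\dots,(G_k,s,t)$ with $V(G_i)\cap V(G_j)=\{s,t\}$ for $i\neq j$ and $G=G_1\cup\dots\cup G_k$. The $G_i$ are the principal subgraphs; a graph is non-serial if it is not a serial superedge. $\mathrm{Aut}_{\mathrm{or}}(H,u,v)$ is the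 group of automorphisms of $H$ fixing $u$ and $v$; $\mathsf{ST}(H)$ is the set of spanning trees of $H$, and $\mathsf{ST}(H)/\Gamma$ the set of orbits of spanning trees under the group $\Gamma$ (trees $A,B$ in the same orbit iff $A=\sigma(B)$ for some $\sigma\in\Gamma$). *)

(* Defs.v *)
From mathcomp Require Import all_boot all_fingroup.
Set Implicit Arguments. Unset Strict Implicit. Unset Printing Implicit Defensive.

Section SP.
Variable T : finType.

(* A (finite simple) graph on a subset of the ambient finite type T is a pair
   (V, E) with V : {set T} the vertex set and E : {set {set T}} the edge set,
   every edge being a 2-element subset of V. *)

(* Structural conditions of a serial superedge (G,s,t) = G_0 ... G_{k-1}
   (0-indexed; principal subgraphs given by Vs i, Es i, ss i, ts i, i < k). *)
Definition serial_shape (V : {set T}) (E : {set {set T}}) (s t : T)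
  (k : nat) (Vs : nat -> {set T}) (Es : nat -> {set {set T}})
  (ss ts : nat -> T) : Prop :=
  [/\ 2 <= k, ss 0 = s, ts k.-1 = t
    & (forall i, i.+1 < k -> ts i = ss i.+1)] /\
  [/\ (forall i, i.+1 < k -> Vs i :&: Vs i.+1 = [set ss i.+1]),
      (forall i j, i < k -> j < k -> i.+2 <= j -> Vs i :&: Vs j = set0),
      V = \bigcup_(i < k) Vs i
    & E = \bigcup_(i < k) Es i].

Definition parallel_shape (V : {set T}) (E : {set {set T}}) (s t : T)
  (k : nat) (Vs : nat -> {set T}) (Es : nat -> {set {set T}}) : Prop :=
  [/\ 2 <= k,
      (forall i j, i < k -> j < k -> i != j -> Vs i :&: Vs j = [set s; t]),
      V = \bigcup_(i < k) Vs i
    & E = \bigcup_(i < k) Es i].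

Inductive osp : {set T} -> {set {set T}} -> T -> T -> Prop :=
| osp_edge s t : s != t -> osp [set s; t] [set [set s; t]] s t
| osp_serial V E s t k Vs Es ss ts :
    serial_shape V E s t k Vs Es ss ts ->
    (forall i, i < k -> osp (Vs i) (Es i) (ss i) (ts i)) ->
    osp V E s t
| osp_parallel V E s t k Vs Es :
    parallel_shape V E s t k Vs Es ->
    (forall i, i < k -> osp (Vs i) (Es i) s t) ->
    osp V E s t.

Definition is_serial (V : {set T}) (E : {set {set T}}) (s t : T) : Prop :=
  exists k Vs Es ss ts, serial_shape V E s t k Vs Es ss ts /\
    (forall i, i < k -> osp (Vs i) (Es i) (ss i) (ts i)).

Definition adj (F : {set {set T}}) : rel T := fun x y => [set x; y] \in F.

Definition connectedb (V : {set T}) (F : {set {set T}}) : bool :=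
  [forall x, forall y, (x \in V) ==> (y \in V) ==> connect (adj F) x y].

(* Since the vertices are
   distinct, m <= #|T|, so it suffices to range over tuples of size <= #|T|. *)
Definition has_cycle (F : {set {set T}}) : bool :=
  [exists m : 'I_(#|T|).+1, exists c : m.-tuple T,
     [&& 2 < m, path.cycle (adj F) c & uniq c]].

Definition ST (V : {set T}) (E : {set {set T}}) : {set {set {set T}}} :=
  [set F : {set {set T}} | [&& F \subset E, connectedb V F & ~~ has_cycle F]].

(* Aut_or(H, u, v) for H = (V, E), realised as the permutations of T that are
   the identity outside V, preserve V and adjacency, and fix u and v. *)
Definition Aut_or (V : {set T}) (E : {set {set T}}) (u v : T) : {set {perm T}} :=
  [set sigma : {perm T} |
    [&& [forall x, (x \notin V) ==> (sigma x == x)],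
        [forall x, (x \in V) ==> (sigma x \in V)],
        [forall x, forall y, ([set x; y] \in E) == ([set sigma x; sigma y] \in E)],
        sigma u == u & sigma v == v]].

Definition act_edges (sigma : {perm T}) (F : {set {set T}}) : {set {set T}} :=
  [set sigma @: f | f : {set T} in F].

Definition orbit_of (A : {set {perm T}}) (F : {set {set T}}) :=
  [set act_edges sigma F | sigma : {perm T} in A].

Definition n_orbits (V : {set T}) (E : {set {set T}}) (u v : T) : nat :=
  #|[set orbit_of (Aut_or V E u v) F | F : {set {set T}} in ST V E]|.

End SP.

(* Main.v *)
Require Import Defs.
From mathcomp Require Import all_boot all_fingroup zify.
Set Implicit Arguments. Unset Strict Implicit. Unset Printing Implicit Defensive.

Section Gen.
Variable T : finType.
Implicit Types (F E : {set {set T}}) (V : {set T}).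

Definition Em E (v : T) := [set e in E | v \notin e].

Lemma adjC F : symmetric (adj F).
Proof. by move=> x y; rewrite /adj setUC. Qed.

Lemma connect_symF F : connect_sym (adj F).
Proof. exact: sym_connect_sym (adjC F). Qed.

Lemma connect_mono F1 F2 : F1 \subset F2 ->
  forall x y, connect (adj F1) x y -> connect (adj F2) x y.
Proof.
move=> sF; apply: connect_sub => x y h; apply: connect1.
by rewrite /adj (subsetP sF).
Qed.

Lemma connect_closed (e : rel T) (P : pred T) x y :
  connect e x y -> P x -> (forall u w, e u w -> P u -> P w) -> P y.
Proof.
move=> /connectP [p pth ->] Px cl; elim: p x pth Px => //= z p IH x /andP[exz pz] Px.
by apply: (IH z pz); apply: cl exz Px.
Qed.

Lemma connect_end F x y : connect (adj F) x y -> x != y ->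
  exists z, [set z; y] \in F.
Proof.
move=> /connectP [p pth ->]; case/lastP: p pth => [|p z]; first by rewrite eqxx.
by rewrite rcons_path last_rcons => /andP[_ h] _; exists (last x p).
Qed.

Lemma adjEm E v x y : adj (Em E v) x y = (adj E x y) && (v \notin [set x; y]).
Proof. by rewrite /adj /Em inE. Qed.

Lemma chain (e : rel T) (c : nat -> T) a b : a <= b ->
  (forall l, a <= l < b -> connect e (c l) (c l.+1)) -> connect e (c a) (c b).
Proof.
elim: b => [|b IH]; first by rewrite leqn0 => /eqP -> _.
rewrite leq_eqVlt => /orP[/eqP -> _|]; first exact: connect0.
rewrite ltnS => ab h; apply: connect_trans (IH ab _) (h b _) => [l /andP[al lb]|].
  by apply: h; rewrite al ltnW.
by rewrite ab /=.
Qed.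

Lemma imset_pair (f : T -> T) x y : f @: [set x; y] = [set f x; f y].
Proof. by rewrite imsetU1 imset_set1. Qed.

Section Aut.
Variables (V : {set T}) (E : {set {set T}}) (u v : T).

Lemma autP (g : {perm T}) : g \in Aut_or V E u v ->
  [/\ (forall x, x \notin V -> g x = x), (forall x, x \in V -> g x \in V),
      (forall x y, ([set x; y] \in E) = ([set g x; g y] \in E)), g u = u & g v = v].
Proof.
rewrite inE => /and5P[/forallP h1 /forallP h2 /forallP h3 /eqP h4 /eqP h5]; split=> //.
- by move=> x xV; apply/eqP; move: (h1 x); rewrite xV.
- by move=> x xV; move: (h2 x); rewrite xV.
by move=> x y; move/forallP: (h3 x) => /(_ y) /eqP.
Qed.

Lemma aut_memV (g : {perm T}) x : g \in Aut_or V E u v -> (g x \in V) = (x \in V).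
Proof.
case/autP=> h1 h2 _ _ _; case xV: (x \in V); first by rewrite h2.
by rewrite h1 // xV.
Qed.

Lemma aut1 : (1%g : {perm T}) \in Aut_or V E u v.
Proof.
rewrite inE; apply/and5P; split; rewrite ?perm1 //.
- by apply/forallP => x; rewrite perm1 eqxx implybT.
- by apply/forallP => x; rewrite perm1 implybb.
by apply/forallP => x; apply/forallP => y; rewrite !perm1 eqxx.
Qed.

Lemma autM (g h : {perm T}) : g \in Aut_or V E u v -> h \in Aut_or V E u v ->
  (g * h)%g \in Aut_or V E u v.
Proof.
move=> gA hA; case/autP: (gA) => g1 g2 g3 g4 g5; case/autP: (hA) => h1 h2 h3 h4 h5.
rewrite inE; apply/and5P; split; do ?[apply/forallP => x]; rewrite ?permM.
- by apply/implyP => xV; rewrite g1 // h1.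
- by apply/implyP => xV; rewrite h2 // g2.
- by apply/forallP => y; rewrite !permM -h3 -g3.
- by rewrite g4 h4.
by rewrite g5 h5.
Qed.

Lemma autV (g : {perm T}) : g \in Aut_or V E u v -> (g^-1)%g \in Aut_or V E u v.
Proof.
move=> gA; case/autP: (gA) => g1 g2 g3 g4 g5.
rewrite inE; apply/and5P; split; do ?[apply/forallP => x].
- apply/implyP => xV; apply/eqP; apply: (@perm_inj _ g); rewrite (permKV g) g1 //.
- by apply/implyP => xV; rewrite -(aut_memV _ gA) (permKV g).
- by apply/forallP => y; rewrite (g3 ((g^-1)%g x)) !(permKV g).
- by apply/eqP; apply: (@perm_inj _ g); rewrite (permKV g) g4.
by apply/eqP; apply: (@perm_inj _ g); rewrite (permKV g) g5.
Qed.

End Aut.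

Lemma act_edgesM (g h : {perm T}) F :
  act_edges (g * h)%g F = act_edges h (act_edges g F).
Proof.
rewrite /act_edges -imset_comp; apply: eq_imset => f /=.
by rewrite -imset_comp; apply: eq_imset => x; rewrite permM.
Qed.

Lemma act_edges1 F : act_edges 1 F = F.
Proof.
rewrite /act_edges -[RHS]imset_id; apply: eq_imset => f.
by rewrite -[RHS]imset_id; apply: eq_imset => x; rewrite perm1.
Qed.

Lemma orbit_of_act (A : {set {perm T}}) (g : {perm T}) F :
  (forall a b, a \in A -> b \in A -> (a * b)%g \in A) ->
  (forall a, a \in A -> (a^-1)%g \in A) -> g \in A ->
  orbit_of A (act_edges g F) = orbit_of A F.
Proof.
move=> AM AV gA; apply/setP => X; apply/imsetP/imsetP => [[r rA ->]|[r rA ->]].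
  by exists (g * r)%g; [exact: AM | rewrite act_edgesM].
exists (g^-1 * r)%g; first by apply: AM => //; apply: AV.
by rewrite -act_edgesM mulgA mulgV mul1g.
Qed.

Lemma orbit_self (A : {set {perm T}}) F : 1%g \in A -> F \in orbit_of A F.
Proof. by move=> A1; apply/imsetP; exists 1%g => //; rewrite act_edges1. Qed.

End Gen.

Lemma card_factor (aT rT rT' : finType) (f : aT -> rT) (g : aT -> rT') (A : {set aT}) :
  {in A &, forall x y, f x = f y -> g x = g y} -> #|g @: A| <= #|f @: A|.
Proof.
move=> fg; case: (set_0Vmem A) => [->|[x0 x0A]]; first by rewrite imset0 cards0.
pose h (O : rT') : rT := f (odflt x0 [pick x in A | g x == O]).
have pre O : O \in g @: A -> exists2 z, z \in A & g z = O /\ h O = f z.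
  case/imsetP=> y yA ->; rewrite /h; case: pickP => [z /andP[zA /eqP gz]|/(_ y)].
    by exists z.
  by rewrite yA eqxx.
have <- : #|h @: (g @: A)| = #|g @: A|.
  apply: card_in_imset => O1 O2 /pre [z1 z1A [g1 ->]] /pre [z2 z2A [g2 ->]] e.
  by rewrite -g1 -g2; apply: fg.
apply: subset_leq_card; apply/subsetP => X /imsetP [O /pre [z zA [_ ->]] ->].
by apply: imset_f.
Qed.

Section STex.
Variable T : finType.

Lemma path_filter (e e' : rel T) (P : pred T) a p :
  (forall u w, e u w -> P w -> e' u w) -> path e a p -> all P p -> path e' a p.
Proof.
move=> h; elim: p a => //= w p IH a /andP[euw pp] /andP[Pw ap].
by rewrite (h _ _ euw Pw) IH.
Qed.

Lemma ST_exists (V : {set T}) (E : {set {set T}}) :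
  connectedb V E -> exists F, F \in ST V E.
Proof.
move=> cE.
have P0 : (E \subset E) && connectedb V E by rewrite subxx.
case: (@arg_minnP _ E (fun F : {set {set T}} => (F \subset E) && connectedb V F) (fun F : {set {set T}} => #|F|) P0) => F /andP[sFE cF] minF.
exists F; rewrite inE sFE cF /=.
apply/negP => /existsP [m /existsP [c /and3P [m3 cyc uq]]].
have sz := size_tuple c.
move: cyc uq; case Ec: (tval c) sz => [|x0 [|x1 q']] sz; try by move: m3; rewrite -sz.
have q'ne : q' != [::] by case: q' sz {Ec} => // sz; move: m3; rewrite -sz.
move=> cyc; have : path (adj F) x0 (x1 :: rcons q' x0) := cyc.
case/andP=> a01 pth; have {}pth : path (adj F) x1 (rcons q' x0) := pth.
rewrite [uniq _]/= !inE negb_or => /and3P[/andP[n01 nx0] nx1 _].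
pose e := [set x0; x1].
have eF : e \in F by [].
pose F' := F :\ e.
have key u w : adj F u w -> (u \notin e) || (w \notin e) -> adj F' u w.
  move=> a h; rewrite /adj in a; rewrite /adj /F' in_setD1 a andbT; apply/eqP => ue.
  by case/orP: h; rewrite -ue !inE eqxx ?orbT.
have c10 : connect (adj F') x1 x0.
  move: pth; rewrite rcons_path => /andP[p1 plast].
  apply/connectP; exists (rcons q' x0); last by rewrite last_rcons.
  rewrite rcons_path; apply/andP; split.
    apply: (@path_filter (adj F) (adj F') (fun w => w \notin e) x1 q' _ p1) => [u w a wn|]; first by apply: key => //; rewrite wn orbT.
    by apply/allP => w wq; rewrite !inE; apply/negP => /orP[]/eqP ew;
      [move: nx0 | move: nx1]; rewrite -ew wq.
  apply: key => //; apply/orP; left.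
  have : last x1 q' \in q' by case: (q') q'ne => // z r _; rewrite /= mem_last.
  by move=> lq; rewrite !inE; apply/negP => /orP[]/eqP ew;
      [move: nx0 | move: nx1]; rewrite -ew lq.
have cF' : connectedb V F'.
  apply/forallP => x; apply/forallP => z; apply/implyP => xV; apply/implyP => zV.
  move/forallP: cF => /(_ x) /forallP /(_ z); rewrite xV zV /=.
  apply: connect_sub => u w a.
  case: (boolP ([set u; w] == e)) => [/eqP ue|ne]; last first.
    by apply: connect1; rewrite /adj /F' in_setD1 ne; rewrite /adj in a.
  have uin : u \in e by rewrite -ue !inE eqxx.
  have win : w \in e by rewrite -ue !inE eqxx orbT.
  move: uin win; rewrite !inE => /orP[]/eqP-> /orP[]/eqP->; rewrite ?connect0 //.
    by rewrite connect_symF.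
have : #|F| <= #|F'|.
  apply: minF; rewrite cF' andbT; apply: subset_trans sFE; apply: subD1set.
by rewrite /F' (cardsD1 e F) eF add1n ltnn.
Qed.

End STex.
Set Implicit Arguments. Unset Strict Implicit. Unset Printing Implicit Defensive.

Section More.
Variable T : finType.
Implicit Types (F E : {set {set T}}).

Definition edges_in E (A : {set T}) :=
  forall e, e \in E -> exists a b, [/\ a != b, a \in A, b \in A & e = [set a; b]].

Lemma edges_sub E A e : edges_in E A -> e \in E -> e \subset A.
Proof.
move=> h /h [a [b [_ aA bA ->]]]; apply/subsetP => x; rewrite !inE.
by case/orP=> /eqP->.
Qed.

Lemma edges_mem E A x y : edges_in E A -> [set x; y] \in E -> x \in A /\ y \in A.
Proof.
move=> h /(edges_sub h) /subsetP sA; split; apply: sA; by rewrite !inE eqxx ?orbT.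
Qed.

Lemma set11_2 (x a b : T) : [set x; x] = [set a; b] -> a = b.
Proof.
move=> e; have ha : a \in [set x; x] by rewrite e !inE eqxx.
have hb : b \in [set x; x] by rewrite e !inE eqxx orbT.
by move: ha hb; rewrite !inE !orbb => /eqP -> /eqP ->.
Qed.

Lemma Em_sub E v : Em E v \subset E.
Proof. by apply/subsetP => e; rewrite inE => /andP[]. Qed.

Lemma lift_Em F E A v x y : F \subset E -> edges_in F A -> v \notin A ->
  connect (adj F) x y -> connect (adj (Em E v)) x y.
Proof.
move=> sFE hF vA; apply: connect_mono; apply/subsetP => e eF.
rewrite inE (subsetP sFE) //=; apply/negP => ve.
by move: vA; rewrite (subsetP (edges_sub hF eF)).
Qed.

Lemma Em_mono F E v : F \subset E -> Em F v \subset Em E v.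
Proof.
move=> sFE; apply/subsetP => e; rewrite !inE => /andP[/(subsetP sFE) -> ->].
by [].
Qed.

Lemma restr_ex (g : {perm T}) (A : {set T}) :
  (forall x, (g x \in A) = (x \in A)) ->
  exists tau : {perm T}, forall x, tau x = if x \in A then g x else x.
Proof.
move=> h; pose f x := if x \in A then g x else x.
have fi : injective f.
  move=> x y; rewrite /f; case: ifP => xA; case: ifP => yA.
  - exact: perm_inj.
  - by move=> e; move: yA; rewrite -e h xA.
  - by move=> e; move: xA; rewrite e h yA.
  by [].
by exists (perm fi) => x; rewrite permE.
Qed.

Lemma has_cycle0 : ~~ has_cycle (set0 : {set {set T}}).
Proof.
apply/negP => /existsP [m /existsP [c /and3P [m3 cyc _]]].
have := size_tuple c; move: cyc; case: (tval c) => [|x p].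
  by move=> _ e; move: m3; rewrite -e.
by case: p => [|y p]; rewrite /= /adj inE.
Qed.

Lemma path_prop (e : rel T) (P Q : pred T) y p :
  (forall u w, e u w -> Q u -> P u -> P w) -> path e y p -> all Q (y :: p) -> P y ->
  all P (y :: p).
Proof.
move=> st; elim: p y => [|z p IH] y /=; first by move=> _ _ ->.
case/andP=> eyz pz /and3P[Qy Qz Qp] Py; rewrite Py /=.
by apply: IH => //; [rewrite /= Qz Qp | apply: st eyz Qy Py].
Qed.

Lemma glue_step FA FB (A B : {set T}) c u w :
  (forall x, x \in A -> x \in B -> x = c) -> edges_in FA A -> edges_in FB B ->
  adj (FA :|: FB) u w -> u != c -> u \in A -> w \in A.
Proof.
move=> AB hA hB; rewrite /adj inE => /orP[] /[dup] ein.
  by move/(edges_mem hA) => [].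
move/(edges_mem hB) => [uB wB] uc uA.
by move: uc; rewrite (AB u uA uB) eqxx.
Qed.

Lemma glue FH FK (VH VK : {set T}) c :
  (forall x, x \in VH -> x \in VK -> x = c) -> edges_in FH VH -> edges_in FK VK ->
  ~~ has_cycle FH -> ~~ has_cycle FK -> ~~ has_cycle (FH :|: FK).
Proof.
move=> HK hH hK nH nK.
apply/negP => /existsP [m /existsP [cs /and3P [m3 cyc uq]]].
have HK' : forall x, x \in VK -> x \in VH -> x = c by move=> x a b; apply: HK.
have side : forall (A B : {set T}) FA FB, (forall x, x \in A -> x \in B -> x = c) ->
    edges_in FA A -> edges_in FB B -> FA :|: FB = FH :|: FK ->
    ~~ has_cycle FA -> all (fun x => x \in A) cs -> False.
  move=> A B FA FB AB hA hB eU nA allA.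
  move/negP: nA; apply; apply/existsP; exists m; apply/existsP; exists cs.
  rewrite m3 uq andbT /=; rewrite -eU in cyc.
  apply: (sub_in_cycle (P := fun x => x \in A)) allA cyc.
  move=> x y xA yA; rewrite /adj inE => /orP[] // /[dup] ein /(edges_mem hB) [xB yB].
  have ex := AB x xA xB; have ey := AB y yA yB; subst.
  by case: (hB _ ein) => a [b [ab _ _ /set11_2 eab]]; move: ab; rewrite eab eqxx.
have sz := size_tuple cs.
have [h [hin hc]] : exists h, h \in cs /\ (c \in cs -> h = c).
  case: (boolP (c \in cs)) => cin; first by exists c.
  exists (nth c cs 0); split => //; apply: mem_nth; rewrite sz; exact: ltn_trans m3.
case: (rot_to hin) => i q rq.
have cyc' : path.cycle (adj (FH :|: FK)) (h :: q) by rewrite -rq rot_cycle.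
have uq' : uniq (h :: q) by rewrite -rq rot_uniq.
have cq : c \notin q.
  apply/negP => cq; have cin : c \in cs by rewrite -(mem_rot i) rq inE cq orbT.
  by move: uq'; rewrite /= (hc cin) cq.
have szq : size q = m.-1 by rewrite -sz; move: (size_rot i cs); rewrite rq /= => <-.
case: q szq cyc' uq' cq rq => [|y q''] szq cyc' uq' cq rq; first by move: m3 szq; case: (nat_of_ord m) => [|[|[|n]]].
have : path (adj (FH :|: FK)) h (y :: rcons q'' h) := cyc'.
case/andP=> ahy pth; have {}pth : path (adj (FH :|: FK)) y (rcons q'' h) := pth.
move: pth; rewrite rcons_path => /andP[pth _].
have allc : all (fun x => x != c) (y :: q'').
  by apply/allP => z zq; apply/eqP => e; move: cq; rewrite -e zq.
have allr : forall P : pred T, all P (h :: y :: q'') -> all P cs.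
  by move=> P; rewrite -rq => /allP a; apply/allP => x xc; apply: a; rewrite mem_rot.
have yc : y != c by move: allc => /andP[].
have [yH|yK] : y \in VH \/ y \in VK.
  by move: ahy; rewrite /adj inE => /orP[] /[dup] _ => [/(edges_mem hH)|/(edges_mem hK)] [_ ->]; [left|right].
- apply: (side VH VK FH FK) => //.
  apply: allr; rewrite /=.
  have -> : h \in VH.
    by apply: (glue_step HK hH hK) yc yH; rewrite adjC.
  apply: (path_prop (e := adj (FH :|: FK)) (Q := fun x => x != c)) => //.
  by move=> u w a uc uH; apply: (glue_step HK hH hK) a uc uH.
- apply: (side VK VH FK FH) => //; first by rewrite setUC.
  apply: allr; rewrite /=.
  have -> : h \in VK.
    by apply: (glue_step HK' hK hH) yc yK; rewrite setUC adjC.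
  apply: (path_prop (e := adj (FH :|: FK)) (Q := fun x => x != c)) => //.
  by move=> u w a uc uK; apply: (glue_step HK' hK hH) uc uK; rewrite setUC.
Qed.
End More.
Definition proj31 (A B C : Prop) (h : [/\ A, B & C]) : A := let: And3 a _ _ := h in a.
Definition proj32 (A B C : Prop) (h : [/\ A, B & C]) : B := let: And3 _ b _ := h in b.
Definition proj33 (A B C : Prop) (h : [/\ A, B & C]) : C := let: And3 _ _ c := h in c.
Set Implicit Arguments. Unset Strict Implicit. Unset Printing Implicit Defensive.

Lemma ctrans (T : finType) (e : rel T) y x z : connect e x y -> connect e y z -> connect e x z.
Proof. exact: connect_trans. Qed.

Lemma cclosed (T : finType) (e : rel T) (P : pred T) x y :
  (forall u w, e u w -> P u -> P w) -> connect e x y -> P x -> P y.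
Proof.
move=> cl /connectP [p pth ->]; elim: p x pth => //= z p IH x /andP[exz pz] Px.
by apply: (IH z pz); apply: cl exz Px.
Qed.

Section Serial.
Variables (T : finType) (V : {set T}) (E : {set {set T}}) (s t : T) (k : nat)
  (Vs : nat -> {set T}) (Es : nat -> {set {set T}}) (ss ts : nat -> T).
Hypothesis sh : serial_shape V E s t k Vs Es ss ts.

Definition cc j := if j < k then ss j else t.

Lemma k2 : 1 < k. Proof. by case: sh => [[]]. Qed.
Lemma cc0 : cc 0 = s. Proof. by rewrite /cc (ltn_trans _ k2) //; case: sh => [[]]. Qed.
Lemma cck : cc k = t. Proof. by rewrite /cc ltnn. Qed.
Lemma ss_cc i : i < k -> ss i = cc i. Proof. by rewrite /cc => ->. Qed.
Lemma ts_cc i : i < k -> ts i = cc i.+1.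
Proof.
case: sh => [[_ _ tk tss] _] ik; rewrite /cc; case: ifP => ik1; first exact: tss.
have ei : k = i.+1 by apply/eqP; rewrite eqn_leq ik leqNgt ik1.
by move: tk; rewrite ei.
Qed.

Lemma VE : V = \bigcup_(i < k) Vs i. Proof. by case: sh => [_ []]. Qed.
Lemma EE : E = \bigcup_(i < k) Es i. Proof. by case: sh => [_ []]. Qed.

Lemma memV i x : i < k -> x \in Vs i -> x \in V.
Proof. by move=> ik xi; rewrite VE; apply/bigcupP; exists (Ordinal ik). Qed.
Lemma memE i e : i < k -> e \in Es i -> e \in E.
Proof. by move=> ik xi; rewrite EE; apply/bigcupP; exists (Ordinal ik). Qed.
Lemma inV x : x \in V -> exists2 i, i < k & x \in Vs i.
Proof. by rewrite VE => /bigcupP [[i ik] _ xi]; exists i. Qed.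
Lemma inE' e : e \in E -> exists2 i, i < k & e \in Es i.
Proof. by rewrite EE => /bigcupP [[i ik] _ xi]; exists i. Qed.

Lemma S0 a b x : a < b -> b < k -> x \in Vs a -> x \in Vs b -> b = a.+1 /\ x = cc b.
Proof.
case: sh => _ [h1 h2 _ _] ab bk xa xb.
case: (ltngtP b a.+1) xb bk => [ba|ba|->] xb bk.
- by move: ba; rewrite ltnS leqNgt ab.
- have : x \in Vs a :&: Vs b by rewrite inE xa xb.
  by rewrite h2 ?inE // (ltn_trans ab).
- have : x \in Vs a :&: Vs a.+1 by rewrite inE xa xb.
  by rewrite h1 // inE => /eqP ->; rewrite ss_cc.
Qed.

Hypothesis ends : forall i, i < k -> [/\ cc i \in Vs i, cc i.+1 \in Vs i & cc i != cc i.+1].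
Hypothesis edges : forall i, i < k -> edges_in (Es i) (Vs i).
Hypothesis conn : forall i x, i < k -> x \in Vs i -> connect (adj (Es i)) (cc i) x.

Lemma S1 m l : l < k -> m <= k -> (cc m \in Vs l) = (l == m) || (l.+1 == m).
Proof.
move=> lk mk; apply/idP/idP; last first.
  by case/orP=> /eqP <-; case: (ends lk).
move=> ml; case: (ltngtP m k) mk ml => // [mk' _ ml|-> _ ml].
  case: (ltngtP l m) => [lm|ml'|->]; last by [].
  - by case: (S0 lm mk' ml (proj31 (ends mk'))) => -> _; rewrite eqxx.
  - case: (S0 ml' lk (proj31 (ends mk')) ml) => e1 e2.
    by case: (ends mk') => _ _; rewrite e2 e1 eqxx.
have k1 : k.-1 < k by rewrite prednK ?leqnn // (ltn_trans _ k2).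
have ek : (k.-1).+1 = k by rewrite prednK // (ltn_trans _ k2).
case: (ltngtP l k.-1) => [lk1||->]; last by rewrite ek eqxx orbT.
- have := proj32 (ends k1); rewrite ek => kin.
  case: (S0 lk1 k1 ml kin) => _ e; case: (ends k1) => _ _.
  by rewrite ek e eqxx.
- by rewrite ltnNge -ltnS ek lk.
Qed.

Lemma cc_in j : j <= k -> cc j \in V.
Proof.
move=> jk; case: (ltngtP j k) jk => // [jk _|-> _].
  by apply: (memV jk); case: (ends jk).
have k1 : k.-1 < k by rewrite prednK ?leqnn // (ltn_trans _ k2).
by apply: (memV k1); rewrite -{1}(prednK (ltn_trans _ k2)); case: (ends k1).
Qed.

Lemma cc_inj l m : l <= k -> m <= k -> cc l = cc m -> l = m.
Proof.
wlog lm : l m / l <= m.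
  by move=> W lk mk e; case: (leqP l m) => h; [apply: W | apply/esym/W => //; apply: ltnW].
move=> lk mk e; case: (ltngtP l m) => [lm'|ml'|->] //; last by move: lm; rewrite leqNgt ml'.
have lk' : l < k by apply: leq_trans lm' mk.
have := proj31 (ends lk'); rewrite e S1 // => /orP[/eqP|/eqP em]; first by move=> x; move: lm'; rewrite x ltnn.
by case: (ends lk') => _ _; rewrite em e eqxx.
Qed.

Lemma Vs_edge i x y : i < k -> x \in Vs i -> y \in Vs i ->
  ([set x; y] \in Es i) = ([set x; y] \in E).
Proof.
move=> ik xi yi; apply/idP/idP; first exact: memE.
case/inE' => j jk ej; case: (edges_mem (edges jk) ej) => xj yj.
have nxy : x <> y.
  move=> exy; subst y; case: (edges jk ej) => a [b [ab _ _ /set11_2 e]].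
  by move: ab; rewrite e eqxx.
case: (ltngtP i j) => [ij|ji|eij]; last by rewrite eij.
- by case: (S0 ij jk xi xj) => _ e1; case: (S0 ij jk yi yj) => _ e2; case: nxy; rewrite e1 e2.
- by case: (S0 ji ik xj xi) => _ e1; case: (S0 ji ik yj yi) => _ e2; case: nxy; rewrite e1 e2.
Qed.

Lemma Es_sub i : i < k -> Es i \subset E.
Proof. by move=> ik; apply/subsetP => e; apply: memE. Qed.


Lemma conn_avoid v a b : a <= b -> b <= k -> (forall m, a <= m < b -> v \notin Vs m) ->
  connect (adj (Em E v)) (cc a) (cc b).
Proof.
move=> ab bk h; apply: chain => // m /andP[am mb].
have mk : m < k by apply: leq_trans mb bk.
apply: (lift_Em (Es_sub mk) (edges mk)); first by apply: h; rewrite am.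
by apply: conn => //; case: (ends mk).
Qed.

Lemma conn_all x : x \in V -> connect (adj E) s x.
Proof.
case/inV => i ik xi; rewrite -cc0.
apply: connect_trans (_ : connect _ (cc i) x); last first.
  by apply: connect_mono (Es_sub ik) _ _ (conn ik xi).
apply: chain => // m /andP[_ mi].
have mk : m < k by apply: ltn_trans mi ik.
by apply: connect_mono (Es_sub mk) _ _ (conn mk (proj32 (ends mk))).
Qed.

Lemma s_in : s \in V. Proof. by rewrite -cc0 cc_in. Qed.
Lemma t_in : t \in V. Proof. by rewrite -cck cc_in. Qed.
Lemma s_t : s != t.
Proof.
apply/eqP; rewrite -cc0 -cck => /cc_inj e.
by move: k2; rewrite -e.
Qed.

Lemma edges_all : edges_in E V.
Proof.
move=> e /inE' [i ik ei]; case: (edges ik ei) => a [b [ab ai bi ->]].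
by exists a, b; split => //; [apply: (memV ik ai) | apply: (memV ik bi)].
Qed.

Hypothesis strong : forall i x, i < k -> x \in Vs i -> x != cc i.+1 ->
  connect (adj (Em (Es i) (cc i.+1))) (cc i) x.

Lemma t_notin m : m.+1 < k -> t \notin Vs m.
Proof.
move=> mk; rewrite -cck S1 ?(ltn_trans _ mk) //.
by rewrite !eqn_leq !(leqNgt k) mk (ltn_trans _ mk) ?andbF.
Qed.

Lemma strong_all x : x \in V -> x != t -> connect (adj (Em E t)) s x.
Proof.
case/inV => i ik xi xt; rewrite -cc0.
apply: (@ctrans _ _ (cc i)).
  apply: conn_avoid => // [|m /andP[_ mi]]; first exact: ltnW.
  by apply: t_notin; apply: leq_trans ik.
case: (boolP (i.+1 == k)) => [/eqP ik1|ik1].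
  apply: connect_mono (Em_mono _ (Es_sub ik)) _ _ _.
  by rewrite -cck -ik1; apply: strong => //; rewrite ik1 cck.
apply: (lift_Em (Es_sub ik) (edges ik)); last exact: conn.
by apply: t_notin; rewrite ltn_neqAle ik1 ik.
Qed.

Definition before v := [set x | (x != v) && connect (adj (Em E v)) s x].

Lemma before_cc j x : j <= k ->
  (x \in before (cc j)) = (x != cc j) && [exists l : 'I_k, (l < j) && (x \in Vs l)].
Proof.
move=> jk; rewrite inE; case: (boolP (x == cc j)) => //= xj.
apply/idP/idP.
  case: j jk xj => [|j] jk xj.
    rewrite cc0 in xj *; rewrite connect_symF => /connect_end /(_ xj) [z].
    by rewrite inE !inE eqxx orbT andbF.
  move=> cx.
  pose P := fun y => (y != cc j.+1) && [exists l : 'I_k, (l < j.+1) && (y \in Vs l)].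
  suff : P x by case/andP.
  apply: (@cclosed _ (adj (Em E (cc j.+1))) P s x _ cx); last first.
    rewrite -cc0; apply/andP; split.
      by apply/eqP => /cc_inj e; move: (e (leq0n _) jk).
    by apply/existsP; exists (Ordinal (ltn_trans (ltn0Sn 0) k2)) => /=; case: (ends (ltn_trans (ltn0Sn 0) k2)).
  move=> u w; rewrite adjEm /P => /andP [ae] nin /andP[_ /existsP [l /andP[lj ul]]].
  have wj : w != cc j.+1 by apply: contraNneq nin => <-; rewrite !inE eqxx orbT.
  rewrite wj /=; case/inE': ae => l' l'k el'.
  case: (edges_mem (edges l'k) el') => ul' wl'.
  case: (ltnP l' j.+1) => [l'j|jl'].
    by apply/existsP; exists (Ordinal l'k); rewrite /= l'j.
  have ll' : l < l' by apply: leq_trans lj jl'.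
  case: (S0 ll' l'k ul ul') => el ue; move: nin; rewrite ue.
  have -> : l' = j.+1 by apply/eqP; rewrite eqn_leq jl' andbT el.
  by rewrite !inE eqxx.
case/existsP => [[l lk]] /= /andP[lj xl].
apply: (@ctrans _ _ (cc l)).
  rewrite -cc0; apply: conn_avoid => // [|m /andP[_ ml]]; first exact: ltnW.
  rewrite S1 ?(ltn_trans ml) //.
  by rewrite !eqn_leq !(leqNgt j) (ltn_trans ml lj) (leq_ltn_trans _ lj) ?andbF.
case: (boolP (l.+1 == j)) => [/eqP lj1|lj1].
  apply: connect_mono (Em_mono _ (Es_sub lk)) _ _ _.
  by rewrite -lj1; apply: strong => //; rewrite lj1.
apply: (lift_Em (Es_sub lk) (edges lk)); last exact: conn.
by rewrite S1 // negb_or lj1 andbT; apply: contraTneq lj => ->; rewrite ltnn.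
Qed.

Definition sep v := ~~ connect (adj (Em E v)) s t.

Lemma before_cc_cc l j : l <= k -> j <= k -> (cc l \in before (cc j)) = (l < j).
Proof.
move=> lk jk; rewrite before_cc //.
have -> : (cc l != cc j) = (l != j).
  by apply/idP/idP; apply: contra => /eqP e; [rewrite e | rewrite (cc_inj lk jk e)].
apply/idP/idP.
  case/andP=> nlj /existsP [[m mk] /= /andP [mj]]; rewrite S1 // => /orP[]/eqP ml.
    by rewrite -ml.
  by rewrite ltn_neqAle nlj -ml.
move=> lj; rewrite (ltn_eqF lj) /=; apply/existsP.
have lk' : l < k by apply: leq_trans lj jk.
by exists (Ordinal lk'); rewrite /= lj; case: (ends lk').
Qed.

Lemma sep_cc j : j <= k -> sep (cc j).
Proof.
move=> jk; apply/negP => c.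
case: (ltngtP j k) jk => // [jk' _|ej _].
  have : t \in before (cc j).
    rewrite inE c andbT -cck; apply/eqP => /(cc_inj (leqnn k) (ltnW jk')) e.
    by move: jk'; rewrite -e ltnn.
  rewrite -cck before_cc ?(ltnW jk') // => /andP[_ /existsP [[l lk] /= /andP[lj]]].
  rewrite S1 // => /orP[]/eqP e; first by move: lk; rewrite e ltnn.
  by rewrite -e ltnS in jk'; move: (leq_trans lj jk'); rewrite ltnn.
move: c; rewrite ej cck => /connect_end /(_ s_t) [z].
by rewrite inE !inE eqxx orbT andbF.
Qed.

Hypothesis nonser : forall i x, i < k -> x \in Vs i -> x != cc i -> x != cc i.+1 ->
  connect (adj (Em (Es i) x)) (cc i) (cc i.+1).

Lemma sep_only v : v \in V -> sep v -> exists2 j, j <= k & v = cc j.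
Proof.
case/inV => i ik vi sv.
case: (boolP (v == cc i)) => [/eqP ->|vci]; first by exists i => //; apply: ltnW.
case: (boolP (v == cc i.+1)) => [/eqP ->|vci1]; first by exists i.+1.
move/negP: sv; case; rewrite -cc0 -cck; apply: chain => // m /andP[_ mk].
case: (ltngtP m i) => [mi|im|->].
- apply: (lift_Em (Es_sub mk) (edges mk)); last by apply: conn => //; case: (ends mk).
  by apply/negP => vm; case: (S0 mi ik vm vi) => _ e; rewrite e eqxx in vci.
- apply: (lift_Em (Es_sub mk) (edges mk)); last by apply: conn => //; case: (ends mk).
  by apply/negP => vm; case: (S0 im mk vi vm) => -> e; rewrite e eqxx in vci1.
by apply: connect_mono (Em_mono _ (Es_sub ik)) _ _ (nonser ik vi vci vci1).
Qed.

Lemma Vs_char i x : i < k -> x \in V ->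
  (x \in Vs i) = (x \notin before (cc i)) && ((x == cc i.+1) || (x \in before (cc i.+1))).
Proof.
move=> ik xV; rewrite !before_cc ?(ltnW ik) //; apply/idP/idP.
  move=> xi; apply/andP; split.
    rewrite negb_and negbK; case: (boolP (x == cc i)) => //= xci.
    apply/negP => /existsP [[l lk] /= /andP[li xl]].
    by case: (S0 li ik xl xi) => _ e; rewrite e eqxx in xci.
  case: (boolP (x == cc i.+1)) => //= _; apply/existsP; exists (Ordinal ik).
  by rewrite /= ltnSn xi.
case/andP => nb /orP [/eqP ->|/andP [_ /existsP [[l lk] /= /andP [li xl]]]].
  by case: (ends ik).
rewrite ltnS leq_eqVlt in li; case/orP: li => [/eqP <- //|li].
move: nb; rewrite negb_and negbK => /orP[/eqP ->|]; first by case: (ends ik).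
by case/existsP; exists (Ordinal lk); rewrite /= li.
Qed.

Section AutS.

Lemma aut_conn (g : {perm T}) v x y : g \in Aut_or V E s t ->
  connect (adj (Em E v)) x y -> connect (adj (Em E (g v))) (g x) (g y).
Proof.
move=> gA /connectP [p pth ->]; apply/connectP; exists (map g p); last by rewrite last_map.
move: pth; apply: homo_path => u w; rewrite !adjEm => /andP[a nv].
case/autP: gA => _ _ h3 _ _; move: a; rewrite /adj h3 => -> /=.
by move: nv; rewrite !inE !(inj_eq perm_inj).
Qed.

Lemma aut_before1 (g : {perm T}) v x : g \in Aut_or V E s t ->
  x \in before v -> g x \in before (g v).
Proof.
move=> gA; rewrite !inE (inj_eq perm_inj) => /andP[-> c] /=.
by case/autP: (gA) => _ _ _ <- _; apply: aut_conn.
Qed.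

Lemma aut_before (g : {perm T}) v x : g \in Aut_or V E s t ->
  (g x \in before (g v)) = (x \in before v).
Proof.
move=> gA; apply/idP/idP; last exact: aut_before1.
by move/(aut_before1 (autV gA)); rewrite !permK.
Qed.

Lemma aut_sep1 (g : {perm T}) v : g \in Aut_or V E s t -> sep (g v) -> sep v.
Proof.
move=> gA; apply: contra => c; case/autP: (gA) => _ _ _ e1 e2.
by rewrite -{1}e1 -e2; apply: aut_conn.
Qed.

Lemma aut_sep (g : {perm T}) v : g \in Aut_or V E s t -> sep (g v) = sep v.
Proof.
move=> gA; apply/idP/idP; first exact: aut_sep1.
by move=> h; apply: (aut_sep1 (autV gA)); rewrite permK.
Qed.

Definition cnt v := #|[set c in V | sep c && (c \in before v)]|.

Lemma aut_cnt (g : {perm T}) v : g \in Aut_or V E s t -> cnt (g v) = cnt v.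
Proof.
move=> gA; rewrite /cnt -[RHS](card_imset _ (@perm_inj _ g)); apply: eq_card => y.
rewrite inE; apply/idP/imsetP.
  case/and3P=> yV sy yb; exists ((g^-1)%g y); last by rewrite permKV.
  rewrite inE -(aut_memV _ gA) -(aut_sep _ gA) -(aut_before _ _ gA) !permKV.
  by rewrite yV sy yb.
case=> z; rewrite inE => /and3P[zV sz zb] ->.
by rewrite (aut_memV _ gA) (aut_sep _ gA) (aut_before _ _ gA) zV sz zb.
Qed.

Lemma cnt_mono l j : l < j -> j <= k -> cnt (cc l) < cnt (cc j).
Proof.
move=> lj jk; have lk : l <= k by apply: ltnW (leq_trans lj jk).
apply: proper_card; apply/properP; split.
  apply/subsetP => c; rewrite in_set => /and3P[cV sc cb].
  case: (sep_only cV sc) => m mk em; rewrite in_set cV sc /=.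
  move: cb; rewrite em !before_cc_cc // => ml; exact: ltn_trans ml lj.
exists (cc l); first by rewrite in_set cc_in // sep_cc // before_cc_cc.
by rewrite in_set before_cc_cc // ltnn !andbF.
Qed.

Lemma aut_fix (g : {perm T}) j : g \in Aut_or V E s t -> j <= k -> g (cc j) = cc j.
Proof.
move=> gA jk.
have gV : g (cc j) \in V by rewrite (aut_memV _ gA) cc_in.
have gs : sep (g (cc j)) by rewrite (aut_sep _ gA) sep_cc.
case: (sep_only gV gs) => l lk el.
have ec : cnt (cc l) = cnt (cc j) by rewrite -el aut_cnt.
case: (ltngtP l j) => [lj|jl|elj]; last by rewrite el elj.
  by move: (cnt_mono lj jk); rewrite ec ltnn.
by move: (cnt_mono jl lk); rewrite ec ltnn.
Qed.

Lemma aut_Vs (g : {perm T}) i x : g \in Aut_or V E s t -> i < k ->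
  (g x \in Vs i) = (x \in Vs i).
Proof.
move=> gA ik; case xV: (x \in V); last first.
  by case/autP: gA => h1 _ _ _ _; rewrite h1 // xV.
have f1 := aut_fix gA (ltnW ik); have f2 := aut_fix gA ik.
have e1 : (g x \in before (cc i)) = (x \in before (cc i)) by rewrite -{1}f1 aut_before.
have e2 : (g x \in before (cc i.+1)) = (x \in before (cc i.+1)) by rewrite -{1}f2 aut_before.
have e3 : (g x == cc i.+1) = (x == cc i.+1) by rewrite -{1}f2 (inj_eq perm_inj).
by rewrite Vs_char ?(aut_memV _ gA) // Vs_char // e1 e2 e3.
Qed.

End AutS.

Lemma notin_edge i x y : i < k -> x \notin Vs i -> [set x; y] \notin Es i.
Proof.
move=> ik xi; apply/negP => /(edges_mem (edges ik)) [xi' _].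
by rewrite xi' in xi.
Qed.

Lemma two_comp i j a b : i < k -> j < k -> i != j -> a \in Vs i -> b \in Vs i ->
  a \in Vs j -> b \in Vs j -> a = b.
Proof.
move=> ik jk ij ai bi aj bj; case: (ltngtP i j) => [l|l|e]; last by rewrite e eqxx in ij.
  by case: (S0 l jk ai aj) => _ ->; case: (S0 l jk bi bj) => _ ->.
by case: (S0 l ik aj ai) => _ ->; case: (S0 l ik bj bi) => _ ->.
Qed.

Lemma restr_aut (g : {perm T}) i : g \in Aut_or V E s t -> i < k ->
  exists tau, tau \in Aut_or (Vs i) (Es i) (cc i) (cc i.+1) /\
    (forall F : {set {set T}}, F \subset Es i -> act_edges tau F = act_edges g F).
Proof.
move=> gA ik; case: (restr_ex (fun x => aut_Vs x gA ik)) => tau ht.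
exists tau; split; last first.
  move=> F sF; apply: eq_in_imset => f fF; apply: eq_in_imset => x xf.
  by rewrite ht (subsetP (edges_sub (edges ik) (subsetP sF _ fF))).
have ci := proj31 (ends ik); have ci1 := proj32 (ends ik).
rewrite inE; apply/and5P; split.
- by apply/forallP => x; apply/implyP => xi; rewrite ht (negbTE xi).
- by apply/forallP => x; apply/implyP => xi; rewrite ht xi aut_Vs.
- apply/forallP => x; apply/forallP => y; apply/eqP.
  case xi: (x \in Vs i); last first.
    by rewrite (negbTE (notin_edge y ik (negbT xi))) ht xi (negbTE (notin_edge _ ik (negbT xi))).
  case yi: (y \in Vs i); last first.
    rewrite setUC (negbTE (notin_edge x ik (negbT yi))) (ht y) yi setUC.
    by rewrite (negbTE (notin_edge _ ik (negbT yi))).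
  rewrite !ht xi yi Vs_edge // Vs_edge ?aut_Vs //.
  by case/autP: gA => _ _ h3 _ _.
- by rewrite ht ci aut_fix // ltnW.
by rewrite ht ci1 aut_fix.
Qed.

Lemma ST_conn (A : {set T}) (F Ed : {set {set T}}) a b : F \in ST A Ed -> a \in A -> b \in A ->
  connect (adj F) a b.
Proof.
rewrite inE => /and3P[_ /forallP c _] aA bA.
by move/forallP: (c a) => /(_ b); rewrite aA bA.
Qed.

Lemma ST_sub (A : {set T}) (F Ed : {set {set T}}) : F \in ST A Ed -> F \subset Ed.
Proof. by rewrite inE => /and3P[]. Qed.

Lemma ST_acyc (A : {set T}) (F Ed : {set {set T}}) : F \in ST A Ed -> ~~ has_cycle F.
Proof. by rewrite inE => /and3P[]. Qed.

Lemma edges_in_sub (F Ed : {set {set T}}) A : F \subset Ed -> edges_in Ed A -> edges_in F A.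
Proof. by move=> sF h e eF; apply: h; apply: (subsetP sF). Qed.

Section Union.
Variable U : nat -> {set {set T}}.
Hypothesis hU : forall j, j < k -> U j \in ST (Vs j) (Es j).

Definition W := \bigcup_(j < k) U j.

Lemma W_ST : W \in ST V E.
Proof.
have Wc : forall x, x \in V -> connect (adj W) s x.
  move=> x; case/inV => i ik xi; rewrite -cc0; apply: (@ctrans _ _ (cc i)).
    apply: chain => // m /andP[_ mi]; have mk : m < k by apply: ltn_trans mi ik.
    apply: (connect_mono (F1 := U m)); first by apply: (bigcup_sup (Ordinal mk)).
    by apply: (ST_conn (hU mk)); case: (ends mk).
  apply: (connect_mono (F1 := U i)); first by apply: (bigcup_sup (Ordinal ik)).
  by apply: (ST_conn (hU ik)) => //; case: (ends ik).
rewrite inE; apply/and3P; split.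
- apply/bigcupsP => [[j jk]] _; apply: subset_trans (ST_sub (hU jk)) (Es_sub jk).
- apply/forallP => x; apply/forallP => y; apply/implyP => xV; apply/implyP => yV.
  by apply: (@ctrans _ _ s); [rewrite connect_symF|]; apply: Wc.
have : forall m, m <= k -> ~~ has_cycle (\bigcup_(j < m) U j).
  elim => [|m IH] mk; first by rewrite big_ord0 has_cycle0.
  rewrite big_ord_recr /=.
  have mk' : m < k by [].
  apply: (glue (VH := \bigcup_(j < m) Vs j) (VK := Vs m) (c := cc m)).
  - move=> x /bigcupP [[j jm] _ xj] xm.
    by case: (S0 jm mk' xj xm) => _ ->.
  - move=> e /bigcupP [[j jm] _ ej].
    have jk : j < k by apply: ltn_trans jm mk'.
    case: (edges jk (subsetP (ST_sub (hU jk)) _ ej)) => a [b [ab aj bj ->]].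
    by exists a, b; split => //; apply/bigcupP; exists (Ordinal jm).
  - exact: edges_in_sub (ST_sub (hU mk')) (edges mk').
  - by apply: IH; apply: ltnW.
  exact: ST_acyc (hU mk').
by move/(_ k (leqnn k)).
Qed.

Lemma W_cap (g : {perm T}) i : g \in Aut_or V E s t -> i < k ->
  act_edges g W :&: Es i = act_edges g (U i).
Proof.
move=> gA ik; apply/setP => e; rewrite inE; apply/andP/imsetP.
  case=> /imsetP [f /bigcupP [[j jk] _ fj] ->] ein.
  case: (boolP (j == i)) => [/eqP eji|nji]; first by exists f; rewrite // -eji.
  case: (edges jk (subsetP (ST_sub (hU jk)) _ fj)) => a [b [ab aj bj ef]].
  move: ein; rewrite ef imset_pair => /(edges_mem (edges ik)) [ai bi].
  rewrite (aut_Vs _ gA ik) in ai; rewrite (aut_Vs _ gA ik) in bi.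
  by move: ab; rewrite (two_comp jk ik nji aj bj ai bi) eqxx.
case=> f fU ->; split.
  by apply: imset_f; apply/bigcupP; exists (Ordinal ik).
case: (edges ik (subsetP (ST_sub (hU ik)) _ fU)) => a [b [ab ai bi ef]].
have fE : f \in Es i by apply: (subsetP (ST_sub (hU ik))).
rewrite ef imset_pair Vs_edge ?aut_Vs //.
by case/autP: gA => _ _ <- _ _; rewrite -ef; apply: (memE ik).
Qed.

Lemma W_cap1 i : i < k -> W :&: Es i = U i.
Proof. by move=> ik; have := W_cap (aut1 V E s t) ik; rewrite !act_edges1. Qed.

End Union.

Lemma orbit_inj i (U U' : nat -> {set {set T}}) : i < k ->
  (forall j, j < k -> U j \in ST (Vs j) (Es j)) ->
  (forall j, j < k -> U' j \in ST (Vs j) (Es j)) ->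
  orbit_of (Aut_or V E s t) (W U) = orbit_of (Aut_or V E s t) (W U') ->
  orbit_of (Aut_or (Vs i) (Es i) (cc i) (cc i.+1)) (U i) =
  orbit_of (Aut_or (Vs i) (Es i) (cc i) (cc i.+1)) (U' i).
Proof.
move=> ik hU hU' eo.
have : W U' \in orbit_of (Aut_or V E s t) (W U) by rewrite eo; apply: orbit_self; apply: aut1.
case/imsetP => g gA eW.
case: (restr_aut gA ik) => tau [tA htau].
have -> : U' i = act_edges tau (U i).
  by rewrite -(W_cap1 hU' ik) eW (W_cap hU gA ik) htau // (ST_sub (hU i ik)).
by rewrite orbit_of_act //; [apply: autM | apply: autV].
Qed.

Hypothesis hST : forall j, j < k -> exists F, F \in ST (Vs j) (Es j).

Lemma comp_le i : i < k ->
  n_orbits (Vs i) (Es i) (cc i) (cc i.+1) <= n_orbits V E s t.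
Proof.
move=> ik; rewrite /n_orbits.
pose T0 j := odflt set0 [pick F in ST (Vs j) (Es j)].
have hT0 j : j < k -> T0 j \in ST (Vs j) (Es j).
  move=> jk; rewrite /T0; case: pickP => [F //|none].
  by case: (hST jk) => F; rewrite none.
pose UF (F : {set {set T}}) j := if j == i then F else T0 j.
have hUF F j : F \in ST (Vs i) (Es i) -> j < k -> UF F j \in ST (Vs j) (Es j).
  by move=> FS jk; rewrite /UF; case: eqP => [->|_] //; apply: hT0.
apply: leq_trans (_ : #|[set orbit_of (Aut_or V E s t) (W (UF F)) | F in ST (Vs i) (Es i)]| <= _).
  apply: card_factor => F F' FS F'S eo.
  have := orbit_inj ik (hUF F ^~ FS) (hUF F' ^~ F'S) eo.
  by rewrite /UF eqxx.
apply: subset_leq_card; apply/subsetP => O /imsetP [F FS ->].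
by apply: imset_f; apply: W_ST => j jk; apply: hUF.
Qed.

Lemma sum_Vs : \sum_(i < k) #|Vs i| <= 2 * #|V|.
Proof.
have h : forall m, m <= k -> \sum_(i < m) (#|Vs i|).-1 <= #|\bigcup_(i < m) Vs i|.
  elim => [|m IH] mk; first by rewrite big_ord0.
  rewrite !big_ord_recr /=.
  have mk' : m < k by [].
  have I1 : #|(\bigcup_(i < m) Vs i) :&: Vs m| <= 1.
    rewrite -(cards1 (cc m)); apply: subset_leq_card; apply/subsetP => x.
    rewrite in_setI => /andP[/bigcupP [[j jm] _ xj] xm]; rewrite inE.
    by case: (S0 jm mk' xj xm) => _ ->.
  have := cardsUI (\bigcup_(i < m) Vs i) (Vs m).
  have := IH (ltnW mk'); move: I1.
  set a := #|_ :&: _|; set b := #|_ :|: _|; set c := #|\bigcup_(i < m) Vs i|.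
  set d := \sum_(i < m) _; move=> I1 h1 e.
  have pos : 0 < #|Vs m| by apply/card_gt0P; exists (cc m); case: (ends mk').
  lia.
have two : forall i, i < k -> #|Vs i| <= 2 * (#|Vs i|).-1.
  move=> i ik; have : #|[set cc i; cc i.+1]| <= #|Vs i|.
    apply: subset_leq_card; apply/subsetP => x; rewrite !inE.
    by case: (ends ik) => a b _ /orP[]/eqP ->.
  case: (ends ik) => _ _ ne; rewrite cards2 ne; lia.
apply: (@leq_trans (\sum_(i < k) 2 * (#|Vs i|).-1)).
  by apply: leq_sum => [[i ik]] _; apply: two.
rewrite -big_distrr /= leq_mul2l /= VE; exact: h.
Qed.

End Serial.
Set Implicit Arguments. Unset Strict Implicit. Unset Printing Implicit Defensive.

Section Osp.
Variable T : finType.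

Definition props (V : {set T}) (E : {set {set T}}) (s t : T) :=
  [/\ s \in V, t \in V, s != t & edges_in E V] /\
  (forall x, x \in V -> connect (adj E) s x) /\
  (forall x, x \in V -> x != t -> connect (adj (Em E t)) s x).

Lemma osp_props (V : {set T}) (E : {set {set T}}) s t : osp V E s t -> props V E s t.
Proof.
elim => {V E s t}.
- move=> s t st; split; first split.
  + by rewrite !inE eqxx.
  + by rewrite !inE eqxx orbT.
  + by [].
  + by move=> e; rewrite inE => /eqP ->; exists s, t; rewrite !inE !eqxx ?orbT.
  split=> x; rewrite !inE => /orP[]/eqP ->; rewrite ?connect0 //.
    by apply: connect1; rewrite /adj inE.
  by rewrite eqxx.
- move=> V E s t k Vs Es ss ts sh _ IH.
  have ends : forall i, i < k -> [/\ cc t k ss i \in Vs i, cc t k ss i.+1 \in Vs i & cc t k ss i != cc t k ss i.+1].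
    move=> i ik; case: (IH i ik) => [[a b c _] _].
    by rewrite -(ss_cc t ss ik) -(ts_cc sh ik).
  have edges : forall i, i < k -> edges_in (Es i) (Vs i).
    by move=> i ik; case: (IH i ik) => [[_ _ _ ?] _].
  have conn : forall i x, i < k -> x \in Vs i -> connect (adj (Es i)) (cc t k ss i) x.
    by move=> i x ik; case: (IH i ik) => [_ [h _]]; rewrite -(ss_cc t ss ik); apply: h.
  have strong : forall i x, i < k -> x \in Vs i -> x != cc t k ss i.+1 ->
      connect (adj (Em (Es i) (cc t k ss i.+1))) (cc t k ss i) x.
    move=> i x ik; case: (IH i ik) => [_ [_ h]].
    by rewrite -(ss_cc t ss ik) -(ts_cc sh ik); apply: h.
  split; first split.
  + exact: (s_in sh ends).
  + exact: (t_in sh ends).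
  + exact: (s_t sh ends).
  + exact: (edges_all sh edges).
  split.
  + exact: (conn_all sh ends conn).
  + exact: (strong_all sh ends edges conn strong).
- move=> V E s t k Vs Es [k2 pw VE EE] _ IH.
  have k0 : 0 < k by apply: ltn_trans k2.
  case: (IH 0 k0) => [[s0 t0 st _] _].
  have memV i x : i < k -> x \in Vs i -> x \in V.
    by move=> ik xi; rewrite VE; apply/bigcupP; exists (Ordinal ik).
  have sEs i : i < k -> Es i \subset E.
    by move=> ik; rewrite EE; apply: (bigcup_sup (Ordinal ik)).
  split; first split.
  + exact: memV s0.
  + exact: memV t0.
  + by [].
  + move=> e; rewrite EE => /bigcupP [[i ik] _ ei].
    case: (IH i ik) => [[_ _ _ ed] _]; case: (ed e ei) => a [b [ab ai bi ->]].
    by exists a, b; split => //; [apply: (memV i) | apply: (memV i)].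
  split => x; rewrite VE => /bigcupP [[i ik] _ xi].
    case: (IH i ik) => [_ [h _]]; exact: connect_mono (sEs i ik) _ _ (h x xi).
  move=> xt; case: (IH i ik) => [_ [_ h]].
  exact: connect_mono (Em_mono _ (sEs i ik)) _ _ (h x xi xt).
Qed.

Lemma osp_conn (V : {set T}) (E : {set {set T}}) s t : osp V E s t -> connectedb V E.
Proof.
move/osp_props => [_ [h _]]; apply/forallP => x; apply/forallP => y.
apply/implyP => xV; apply/implyP => yV.
by apply: (@ctrans _ _ s); [rewrite connect_symF|]; apply: h.
Qed.

Lemma nonser_conn (V : {set T}) (E : {set {set T}}) a b : osp V E a b -> ~ is_serial V E a b ->
  forall x, x \in V -> x != a -> x != b -> connect (adj (Em E x)) a b.
Proof.
case => {V E a b}.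
- by move=> s t _ _ x; rewrite !inE => /orP[]/eqP -> ; rewrite eqxx.
- move=> V E s t k Vs Es ss ts sh comps ns; case: ns.
  by exists k, Vs, Es, ss, ts.
move=> V E s t k Vs Es [k2 pw VE EE] comps _ x.
rewrite VE => /bigcupP [[i ik] _ xi] xs xt.
pose j := if i == 0 then 1 else 0.
have jk : j < k by rewrite /j; case: (i == 0) => //; apply: ltn_trans k2.
have ji : i != j by rewrite /j; case: (i =P 0) => [->|/eqP].
have xj : x \notin Vs j.
  apply/negP => xj; have : x \in Vs i :&: Vs j by rewrite inE xi xj.
  by rewrite pw // !inE (negbTE xs) (negbTE xt).
case: (osp_props (comps j jk)) => [[_ tj _ ed] [h _]].
apply: (lift_Em _ ed xj (h t tj)).
by rewrite EE; apply: (bigcup_sup (Ordinal jk)).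
Qed.

End Osp.

Theorem lemma5p13 :
  exists C : nat, 0 < C /\
  forall (T : finType) (V : {set T}) (E : {set {set T}}) (s t : T)
    (k : nat) (Vs : nat -> {set T}) (Es : nat -> {set {set T}}) (ss ts : nat -> T),
    serial_shape V E s t k Vs Es ss ts ->
    (forall i, i < k -> osp (Vs i) (Es i) (ss i) (ts i)) ->
    (forall i, i < k -> ~ is_serial (Vs i) (Es i) (ss i) (ts i)) ->
    \sum_(i < k) #|Vs i| * n_orbits (Vs i) (Es i) (ss i) (ts i)
      <= C * #|V| * n_orbits V E s t.
Proof.
exists 2; split => // T V E s t k Vs Es ss ts sh comps nser.
have ends : forall i, i < k -> [/\ cc t k ss i \in Vs i, cc t k ss i.+1 \in Vs i & cc t k ss i != cc t k ss i.+1].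
  move=> i ik; case: (osp_props (comps i ik)) => [[a b c _] _].
  by rewrite -(ss_cc t ss ik) -(ts_cc sh ik).
have edges : forall i, i < k -> edges_in (Es i) (Vs i).
  by move=> i ik; case: (osp_props (comps i ik)) => [[_ _ _ ?] _].
have conn : forall i x, i < k -> x \in Vs i -> connect (adj (Es i)) (cc t k ss i) x.
  by move=> i x ik; case: (osp_props (comps i ik)) => [_ [h _]]; rewrite -(ss_cc t ss ik); apply: h.
have strong : forall i x, i < k -> x \in Vs i -> x != cc t k ss i.+1 ->
    connect (adj (Em (Es i) (cc t k ss i.+1))) (cc t k ss i) x.
  move=> i x ik; case: (osp_props (comps i ik)) => [_ [_ h]].
  by rewrite -(ss_cc t ss ik) -(ts_cc sh ik); apply: h.
have nonser : forall i x, i < k -> x \in Vs i -> x != cc t k ss i -> x != cc t k ss i.+1 ->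
    connect (adj (Em (Es i) x)) (cc t k ss i) (cc t k ss i.+1).
  move=> i x ik; rewrite -(ss_cc t ss ik) -(ts_cc sh ik).
  exact: nonser_conn (comps i ik) (nser i ik) x.
have hST : forall j, j < k -> exists F, F \in ST (Vs j) (Es j).
  by move=> j jk; apply: ST_exists; apply: osp_conn (comps j jk).
rewrite (eq_bigr (fun i : 'I_k => #|Vs i| * n_orbits (Vs i) (Es i) (cc t k ss i) (cc t k ss i.+1))); last first.
  by move=> [i ik] _; rewrite /= (ss_cc t ss ik) (ts_cc sh ik).
apply: (@leq_trans (\sum_(i < k) #|Vs i| * n_orbits V E s t)).
  apply: leq_sum => [[i ik]] _; rewrite leq_mul2l; apply/orP; right.
  exact: (comp_le sh ends edges conn strong nonser hST ik).
rewrite -big_distrl /= leq_mul2r; apply/orP; right.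
exact: (sum_Vs sh ends).
Qed.
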